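(* Cobordism is an equivalence relation on $\mathcal{S}_2$; in particular, every $G\in\mathcal{S}_2$ is cobordant to itself, i.e. there is a three-dimensional geometric graph with boundary $H$ whose boundary is isomorphic to the disjoint union of two copies of $G$.
   Context: All graphs are finite simple graphs. For a vertex $x$, $S(x)$ is the subgraph induced by the neighbors of $x$. A graph is contractible if it is $K_1$, or, inductively, if there is a vertex $x$ with both $S(x)$ and the subgraph induced by $V\setminus\{x\}$ contractible. $\mathcal{G}_0$: graphs without edges; $\mathcal{S}_0$: those with two vertices; $\mathcal{B}_0$: those with one vertex. For $d\ge1$: $\mathcal{G}_d$ is the class of graphs in which every $S(x)$ lies in $\mathcal{S}_{d-1}\cup\mathcal{B}_{d-1}$; the boundary $\delta G$ is the subgraph induced by vertices with $S(x)\in\mathcal{B}_{d-1}$, and the interior (other vertices) must be nonempty; $\mathcal{B}_d$: contractible graphs in $\mathcal{G}_d$ with boundary in $\mathcal{S}_{d-1}$; $\mathcal{S}_d$: non-contractible graphs in $\mathcal{G}_d$ such that removing any single vertex yields a graph in $\mathcal{B}_d$. A three-dimensional geometric graph with boundary is a graph in which every unit sphere lies in $\mathcal{S}_2\cup\mathcal{B}_2$ (i.e. a graph in $\mathcal{G}_3$). Two graphs $G_1,G_2$ (two-dimensional, without boundary) are cobordant if there is a three-dimensional geometric graph with boundary $H$ such that the boundary $\delta H$ is the disjoint union $G_1\sqcup G_2$. *)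

(* Defs.v *)
From mathcomp Require Import all_boot.
Set Implicit Arguments. Unset Strict Implicit. Unset Printing Implicit Defensive.

Record graph := Graph {
  gV :> finType;
  gadj : rel gV;
  gsym : symmetric gadj;
  girr : irreflexive gadj }.

Section Induced.
Variable G : graph.
Local Notation V := (gV G).
Local Notation adj := (@gadj G).

(* Induced subgraphs are represented by their vertex sets A : {set V}. *)

Definition nbr (A : {set V}) (x : V) : {set V} := [set y in A | adj x y].

Inductive contractible : {set V} -> Prop :=
| contr_K1 : forall x, contractible [set x]
| contr_step : forall (A : {set V}) (x : V), x \in A -> contractible (nbr A x) ->
    contractible (A :\ x) -> contractible A.

Definition no_edges (A : {set V}) : Prop :=
  forall x y, x \in A -> y \in A -> ~~ adj x y.

(* G_d for d >= 1, given the classes S' = S_{d-1}, B' = B_{d-1} *)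
Definition Gstep (S' B' : {set V} -> Prop) (A : {set V}) : Prop :=
  (forall x, x \in A -> S' (nbr A x) \/ B' (nbr A x)) /\
  (exists x, x \in A /\ ~ B' (nbr A x)).

Definition is_boundary (B' : {set V} -> Prop) (A Bd : {set V}) : Prop :=
  forall x, x \in Bd <-> (x \in A /\ B' (nbr A x)).

Fixpoint SB (d : nat) : ({set V} -> Prop) * ({set V} -> Prop) :=
  match d with
  | 0 => (fun A : {set V} => #|A| = 2 /\ no_edges A, fun A : {set V} => #|A| = 1)
  | d'.+1 =>
      let S' := (SB d').1 in let B' := (SB d').2 in
      let Bd := fun A : {set V} => contractible A /\ Gstep S' B' A /\
                  exists D : {set V}, is_boundary B' A D /\ S' D in
      (fun A : {set V} => Gstep S' B' A /\ ~ contractible A /\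
                  forall x, x \in A -> Bd (A :\ x),
       Bd)
  end.

Definition inS (d : nat) (A : {set V}) := (SB d).1 A.
Definition inB (d : nat) (A : {set V}) := (SB d).2 A.

Definition inG (d : nat) (A : {set V}) : Prop :=
  match d with
  | 0 => no_edges A
  | d'.+1 => Gstep (inS d') (inB d') A
  end.

Definition boundary_of (d : nat) (A Bd : {set V}) : Prop :=
  match d with
  | 0 => Bd = set0
  | d'.+1 => is_boundary (inB d') A Bd
  end.
End Induced.

Definition in_S (d : nat) (G : graph) : Prop := inS d [set: gV G].
Definition in_G (d : nat) (G : graph) : Prop := inG d [set: gV G].

Definition sum_adj (G1 G2 : graph) : rel (gV G1 + gV G2)%type :=
  fun u v => match u, v with
  | inl a, inl b => @gadj G1 a b
  | inr a, inr b => @gadj G2 a b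
  | _, _ => false end.

Lemma sum_adj_sym (G1 G2 : graph) : symmetric (@sum_adj G1 G2).
Proof. by case=> a [] b //=; rewrite gsym. Qed.

Lemma sum_adj_irr (G1 G2 : graph) : irreflexive (@sum_adj G1 G2).
Proof. by case=> a /=; rewrite girr. Qed.

Definition dunion (G1 G2 : graph) : graph :=
  Graph (@sum_adj_sym G1 G2) (@sum_adj_irr G1 G2).

Definition iso_to_induced (G H : graph) (B : {set gV H}) : Prop :=
  exists f : gV G -> gV H,
    injective f /\ f @: [set: gV G] = B /\
    forall x y, @gadj G x y = @gadj H (f x) (f y).

(* three-dimensional geometric graph with boundary: a graph in G_3 *)
Definition cobordant (G1 G2 : graph) : Prop :=
  exists H : graph, in_G 3 H /\
    exists Bd : {set gV H}, boundary_of 3 [set: gV H] Bd /\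
      iso_to_induced (dunion G1 G2) Bd.

(* Main.v *)
Require Import Defs.
From mathcomp Require Import all_boot.
From mathcomp Require Import ssralg ssrint zify.
Set Implicit Arguments. Unset Strict Implicit. Unset Printing Implicit Defensive.

Section Chi.
Variable G : graph.
Local Notation V := (gV G).
Local Notation adj := (@gadj G).

Definition cliqueb (K : {set V}) :=
  [forall x in K, forall y in K, (x != y) ==> adj x y].
Definition cl (A : {set V}) (p : bool) :=
  [set K : {set V} | [&& K \subset A, cliqueb K & odd #|K| == p]].
Definition chi (A : {set V}) : int := ((#|cl A true|)%:Z - (#|cl A false|)%:Z)%R.

Lemma nbr_notin (A : {set V}) x : x \notin nbr A x.
Proof. by rewrite inE girr andbF. Qed.

Lemma cl_split (A : {set V}) x p : x \in A ->
  #|cl A p| = #|cl (A :\ x) p| + #|cl (nbr A x) (~~ p)|.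
Proof.
move=> xA.
have -> : cl A p = cl (A :\ x) p :|: [set x |: K | K in cl (nbr A x) (~~ p)].
  apply/setP=> K; rewrite !inE; apply/idP/idP.
  - case/and3P=> KA cK oK.
    case xK: (x \in K).
    + apply/orP; right; apply/imsetP; exists (K :\ x).
        rewrite !inE; apply/and3P; split.
        * apply/subsetP=> y; rewrite !inE => /andP [yx yK].
          rewrite (subsetP KA _ yK) /=.
          by move/forallP: cK => /(_ x); rewrite xK /= => /forallP /(_ y); rewrite yK eq_sym yx.
        * apply/forallP=> y; apply/implyP; rewrite !inE => /andP [_ yK].
          apply/forallP=> z; apply/implyP; rewrite !inE => /andP [_ zK].
          by move/forallP: cK => /(_ y); rewrite yK /= => /forallP /(_ z); rewrite zK.
        * by move: oK; rewrite (cardsD1 x K) xK /= => /eqP <-; case: (odd _).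
      by rewrite setD1K.
    + apply/orP; left; apply/and3P; split => //.
      apply/subsetP=> y yK; rewrite !inE (subsetP KA _ yK) andbT.
      by apply/eqP=> e; move: yK; rewrite e xK.
  - case/orP.
    + case/and3P=> KA -> ->; rewrite andbT /=.
      by rewrite andbT; apply/subsetP=> y yK; move: (subsetP KA _ yK); rewrite inE => /andP [].
    + case/imsetP=> L; rewrite inE => /and3P [LN cL oL] ->.
      have xL : x \notin L.
        by apply/negP=> /(subsetP LN); rewrite (negPf (nbr_notin A x)).
      apply/and3P; split.
      * apply/subsetP=> y; rewrite !inE => /orP [/eqP -> //|/(subsetP LN)].
        by rewrite !inE => /andP [].
      * apply/forallP=> y; apply/implyP; rewrite !inE => yL.
        apply/forallP=> z; apply/implyP; rewrite !inE => zL.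
        apply/implyP=> yz.
        case/orP: yL => [/eqP Ey|yL]; case/orP: zL => [/eqP Ez|zL].
        -- by move: yz; rewrite Ey Ez eqxx.
        -- by move: (subsetP LN _ zL); rewrite inE Ey => /andP [].
        -- by move: (subsetP LN _ yL); rewrite inE Ez gsym => /andP [].
        -- by move/forallP: cL => /(_ y); rewrite yL /= => /forallP /(_ z); rewrite zL /= yz.
      * by rewrite cardsU1 xL /= (eqP oL); case: (p) oL.
rewrite cardsU.
have -> : cl (A :\ x) p :&: [set x |: K | K in cl (nbr A x) (~~ p)] = set0.
  apply/setP=> K; rewrite !inE; apply/negP=> /andP [/and3P [KA _ _] /imsetP [L _ EL]].
  by move: (subsetP KA x); rewrite EL !inE eqxx /= => /(_ isT).
rewrite cards0 subn0; congr (_ + _).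
apply: card_in_imset => K L; rewrite !inE => /and3P [KN _ _] /and3P [LN _ _] E.
have xK : x \notin K by apply/negP=> /(subsetP KN); rewrite (negPf (nbr_notin A x)).
have xL : x \notin L by apply/negP=> /(subsetP LN); rewrite (negPf (nbr_notin A x)).
by rewrite -(setU1K xK) -(setU1K xL) E.
Qed.

Lemma chi_step (A : {set V}) x : x \in A -> chi A = (chi (A :\ x) - chi (nbr A x))%R.
Proof. move=> xA; rewrite /chi !(cl_split _ xA) /=; lia. Qed.

Lemma chi0 : chi set0 = (-1)%R.
Proof.
rewrite /chi.
have -> : cl set0 true = set0.
  apply/setP=> K; rewrite !inE subset0; apply/negP=> /and3P [/eqP -> _].
  by rewrite cards0.
have -> : cl set0 false = [set set0].
  apply/setP=> K; rewrite !inE subset0; apply/idP/idP.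
    by case/and3P.
  move/eqP=> ->; rewrite eqxx cards0 /= andbT; apply/forallP=> y; by rewrite inE.
by rewrite cards0 cards1.
Qed.

Lemma nbr1 (x : V) : nbr [set x] x = set0.
Proof. by apply/setP=> y; rewrite !inE; case: eqP => // ->; rewrite girr. Qed.

Lemma chi1 (x : V) : chi [set x] = 0%R.
Proof. by rewrite (chi_step (set11 x)) setDv nbr1 chi0. Qed.

Lemma chi_contr (A : {set V}) : contractible A -> chi A = 0%R.
Proof. by elim=> [x|B x xB _ IH1 _ IH2]; [exact: chi1|rewrite (chi_step xB) IH1 IH2]. Qed.

Lemma inS0 (A : {set V}) : inS 0 A = (#|A| = 2 /\ no_edges A). Proof. by []. Qed.
Lemma inB0 (A : {set V}) : inB 0 A = (#|A| = 1). Proof. by []. Qed.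
Lemma inSS d (A : {set V}) : inS d.+1 A =
  (Gstep (inS d) (inB d) A /\ ~ contractible A /\ forall x, x \in A -> inB d.+1 (A :\ x)).
Proof. by []. Qed.
Lemma inBS d (A : {set V}) : inB d.+1 A =
  (contractible A /\ Gstep (inS d) (inB d) A /\
     exists D : {set V}, is_boundary (inB d) A D /\ inS d D).
Proof. by []. Qed.

Lemma B_contr d (A : {set V}) : inB d A -> contractible A.
Proof.
case: d => [|d]; last by rewrite inBS => -[].
by rewrite inB0 => /eqP /cards1P [x ->]; exact: contr_K1.
Qed.

Lemma S_not_B d (A : {set V}) : inS d A -> ~ inB d A.
Proof.
case: d => [|d].
  by rewrite inS0 inB0 => -[-> _].
by rewrite inSS => -[_ [nc _]] /B_contr.
Qed.

Definition sgn (d : nat) : int := if odd d then (-1)%R else 1%R.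

Lemma chi_S d (A : {set V}) : inS d A -> chi A = sgn d.
Proof.
elim: d A => [|d IH] A.
  rewrite inS0 => -[cA ne].
  have : (0 < #|A|) by rewrite cA.
  case/card_gt0P=> a aA.
  rewrite (chi_step aA).
  have : #|A :\ a| == 1 by move: cA; rewrite (cardsD1 a) aA add1n => -[->].
  case/cards1P=> b ->; rewrite chi1.
  have -> : nbr A a = set0.
    by apply/setP=> y; rewrite !inE; apply/negP=> /andP [yA ay]; move: (ne a y aA yA); rewrite ay.
  by rewrite chi0.
rewrite inSS => -[[Hall [x [xA nB]]] [_ HB]].
rewrite (chi_step xA) (chi_contr (B_contr (HB x xA))).
have : inS d (nbr A x) by case: (Hall x xA).
move/IH=> ->; rewrite /sgn /=; case: (odd d) => //.
Qed.

Lemma S_nbr d (A : {set V}) : inS d.+1 A -> forall x, x \in A -> inS d (nbr A x).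
Proof.
move=> SA x xA.
have cA := chi_S SA.
move: SA; rewrite inSS => -[[Hall _] [_ HB]].
case: (Hall x xA) => // Bx.
move: cA; rewrite (chi_step xA) (chi_contr (B_contr (HB x xA))) (chi_contr (B_contr Bx)).
by rewrite /sgn; case: (odd _).
Qed.
End Chi.
Section Transport.
Variables G H : graph.
Variable f : gV G -> gV H.
Hypothesis finj : injective f.
Hypothesis fadj : forall x y, @gadj H (f x) (f y) = @gadj G x y.

Lemma nbr_im (A : {set gV G}) x : nbr (f @: A) (f x) = f @: nbr A x.
Proof.
apply/setP=> y; rewrite inE; apply/andP/imsetP.
- case=> /imsetP [z zA ->]; rewrite fadj => xz; exists z => //; by rewrite inE zA.
- case=> z; rewrite inE => /andP [zA xz] ->; split; first by rewrite mem_imset.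
  by rewrite fadj.
Qed.

Lemma imD1 (A : {set gV G}) x : f @: (A :\ x) = f @: A :\ f x.
Proof.
apply/setP=> y; rewrite [in RHS]inE; apply/imsetP/andP.
- case=> z /setD1P [zx zA] ->; split; last by rewrite mem_imset.
  by rewrite inE (inj_eq finj).
- case=> yx /imsetP [z zA Ey]; exists z => //; apply/setD1P; split => //.
  by move: yx; rewrite Ey inE (inj_eq finj).
Qed.

Lemma contr_im (A : {set gV G}) : contractible A -> contractible (f @: A).
Proof.
elim=> [x|B x xB _ IH1 _ IH2]; first by rewrite imset_set1; exact: contr_K1.
apply: (@contr_step _ _ (f x)); first by rewrite mem_imset.
  by rewrite nbr_im.
by rewrite -imD1.
Qed.

Lemma contr_pre (B : {set gV H}) : contractible B ->
  forall A : {set gV G}, B = f @: A -> contractible A.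
Proof.
elim=> [y|B0 y yB _ IH1 _ IH2] A EB.
  have : #|A| == 1 by rewrite -(card_imset _ finj) -EB cards1.
  by case/cards1P=> a ->; exact: contr_K1.
move: (yB); rewrite EB => /imsetP [x xA Ey].
apply: (@contr_step _ _ x xA).
  by apply: IH1; rewrite EB Ey nbr_im.
by apply: IH2; rewrite EB Ey imD1.
Qed.

Lemma contr_iff (A : {set gV G}) : contractible A <-> contractible (f @: A).
Proof. split; [exact: contr_im | move=> c; exact: contr_pre c A erefl]. Qed.

Lemma Gstep_iff (S' B' : {set gV G} -> Prop) (S'' B'' : {set gV H} -> Prop)
  (HS : forall A, S' A <-> S'' (f @: A)) (HB : forall A, B' A <-> B'' (f @: A))
  (A : {set gV G}) : Gstep S' B' A <-> Gstep S'' B'' (f @: A).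
Proof.
split.
- case=> [Hall [x [xA nB]]]; split.
    move=> y /imsetP [z zA ->]; rewrite nbr_im -HS -HB; exact: Hall.
  by exists (f x); rewrite mem_imset // nbr_im -HB.
- case=> [Hall [y [yA nB]]]; split.
    move=> x xA; rewrite HS HB -nbr_im; apply: Hall; by rewrite mem_imset.
  case/imsetP: yA nB => x xA -> nB; exists x; split => //.
  by rewrite HB -nbr_im.
Qed.

Lemma bd_iff (B' : {set gV G} -> Prop) (B'' : {set gV H} -> Prop)
  (HB : forall A, B' A <-> B'' (f @: A)) (A : {set gV G}) :
  (forall D, is_boundary B' A D -> is_boundary B'' (f @: A) (f @: D)) /\
  (forall D, is_boundary B'' (f @: A) D -> D = f @: (f @^-1: D) /\ is_boundary B' A (f @^-1: D)).
Proof.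
split.
- move=> D bD y; split.
    case/imsetP=> x /bD [xA Bx] ->; rewrite nbr_im -HB mem_imset //.
  case=> /imsetP [x xA ->]; rewrite nbr_im -HB mem_imset // => Bx.
  by apply/bD.
- move=> D bD; split.
    apply/setP=> y; apply/idP/imsetP.
      move=> yD; case: (bD y) => /(_ yD) [/imsetP [x _ Ey] _] _.
      by exists x; rewrite // inE -Ey.
    by case=> x; rewrite inE => ? ->.
  move=> x; rewrite inE (bD (f x)) mem_imset // nbr_im -HB; done.
Qed.

Lemma SB_iff d : (forall A : {set gV G}, inS d A <-> inS d (f @: A)) /\
                 (forall A : {set gV G}, inB d A <-> inB d (f @: A)).
Proof.
elim: d => [|d [IHS IHB]].
  split=> A; rewrite ?inS0 ?inB0 (card_imset _ finj) //.
  split=> -[c ne]; split=> //.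
    move=> y z /imsetP [x xA ->] /imsetP [w wA ->]; rewrite fadj; exact: ne.
  move=> x w xA wA; rewrite -fadj; apply: ne; by rewrite mem_imset.
have Gsi := Gstep_iff IHS IHB.
have bd1 := fun A => proj1 (@bd_iff (inB d) (inB d) IHB A).
have bd2 := fun A => proj2 (@bd_iff (inB d) (inB d) IHB A).
split=> A; rewrite ?inSS ?inBS.
- rewrite -Gsi -contr_iff; split.
    case=> [g [nc HA]]; split => //; split => //.
    move=> y /imsetP [x xA ->]; rewrite -imD1; move: (HA x xA).
    by rewrite !inBS -Gsi -contr_iff => -[c [g' [D [bD SD]]]]; split => //; split => //;
      exists (f @: D); split; [apply: bd1 | rewrite -IHS].
  case=> [g [nc HA]]; split => //; split => //.
  move=> x xA; move: (HA (f x)); rewrite mem_imset // -imD1 => /(_ xA).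
  rewrite !inBS -Gsi -contr_iff => -[c [g' [D [bD SD]]]]; split => //; split => //.
  have [ED bD'] := bd2 _ _ bD; exists (f @^-1: D); split => //; rewrite IHS -ED //.
- rewrite -Gsi -contr_iff; split.
    case=> [c [g [D [bD SD]]]]; split => //; split => //.
    by exists (f @: D); split; [apply: bd1 | rewrite -IHS].
  case=> [c [g [D [bD SD]]]]; split => //; split => //.
  have [ED bD'] := bd2 _ _ bD; exists (f @^-1: D); split => //; rewrite IHS -ED //.
Qed.
End Transport.
Section Wheel.
Variable W : graph.
Local Notation V := (gV W).
Local Notation adj := (@gadj W).

Lemma nbr_cone_c (c : V) (B : {set V}) : c \notin B -> (forall b, b \in B -> adj c b) ->
  nbr (c |: B) c = B.
Proof.
move=> cB Hc; apply/setP=> y; rewrite !inE.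
case: eqP => [->|_] /=; first by rewrite girr (negPf cB).
by case yB: (y \in B) => //; rewrite Hc.
Qed.

Lemma nbr_cone_b (c : V) (B : {set V}) b : adj c b ->
  nbr (c |: B) b = c |: nbr B b.
Proof.
move=> cb; apply/setP=> y; rewrite !inE.
by case: eqP => [->|_] //=; rewrite gsym cb.
Qed.

Lemma cone_contr (c : V) : forall n (B : {set V}), #|B| = n -> c \notin B ->
  (forall b, b \in B -> adj c b) -> contractible (c |: B).
Proof.
elim/ltn_ind=> n IH B cB cnB Hc.
case: (set_0Vmem B) => [->|[b bB]]; first by rewrite setU0; exact: contr_K1.
apply: (@contr_step _ _ b); first by rewrite !inE bB orbT.
  rewrite nbr_cone_b; last exact: Hc.
  apply: (IH #|nbr B b|) => //.
  - rewrite -cB; apply: proper_card; apply/properP; split.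
      by apply/subsetP=> y; rewrite inE => /andP [].
    by exists b => //; rewrite inE girr andbF.
  - by rewrite inE negb_and cnB.
  - by move=> y; rewrite inE => /andP [yB _]; exact: Hc.
have -> : (c |: B) :\ b = c |: (B :\ b).
  apply/setP=> y; rewrite !inE; case: (eqVneq y c) => [->|] //=.
  rewrite andbT; apply/eqP=> e; move: (Hc b bB); by rewrite -e girr.
apply: (IH #|B :\ b|) => //.
- by rewrite -cB (cardsD1 b B) bB.
- by rewrite inE negb_and cnB orbT.
- by move=> y; rewrite inE => /andP [_ yB]; exact: Hc.
Qed.

Lemma cone_contr' (c : V) (B : {set V}) : c \notin B ->
  (forall b, b \in B -> adj c b) -> contractible (c |: B).
Proof. exact: (cone_contr erefl). Qed.

Lemma wheel (A : {set V}) (c : V) : inS 1 A -> c \notin A ->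
  (forall a, a \in A -> adj c a) -> inB 2 (c |: A).
Proof.
move=> SA cA Hc.
have SN : forall a, a \in A -> inS 0 (nbr A a) := S_nbr SA.
have NB : ~ inB 1 A by apply: S_not_B.
have cN : forall a, a \in A -> c \notin nbr A a.
  by move=> a aA; rewrite inE (negPf cA).
have BN : forall a, a \in A -> inB 1 (c |: nbr A a).
  move=> a aA; have := SN a aA; rewrite inS0 => -[n2 ne].
  have cadj : forall b, b \in nbr A a -> adj c b.
    by move=> b; rewrite inE => /andP [bA _]; exact: Hc.
  have nbrb : forall b, b \in nbr A a -> nbr (c |: nbr A a) b = [set c].
    move=> b bN; rewrite nbr_cone_b; last exact: cadj.
    apply/setP=> y; rewrite !inE; case: eqP => //= _.
    apply/negP=> /andP [yN by_]; move: (ne b y bN); rewrite inE => /(_ yN); by rewrite by_.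
  have nc : nbr (c |: nbr A a) c = nbr A a by apply: nbr_cone_c; [exact: cN | exact: cadj].
  rewrite inBS; split; first by apply: cone_contr'; [exact: cN | exact: cadj].
  split.
    split.
      move=> v /setU1P [->|vN].
        by left; rewrite nc; exact: SN.
      by right; rewrite nbrb // inB0 cards1.
    by exists c; rewrite !inE eqxx; split => //; rewrite nc inB0 n2.
  exists (nbr A a); split; last exact: SN.
  move=> v; rewrite inB0; split.
    by move=> vN; rewrite nbrb // cards1; split => //; apply/setU1P; right.
  case=> /setU1P [->|vN]; last by [].
  by rewrite nc n2.
rewrite inBS; split; first exact: cone_contr'.
split.
  split.
    move=> v; rewrite !inE => /orP [/eqP ->|vA].
      by left; rewrite nbr_cone_c.
    by right; rewrite nbr_cone_b; [exact: BN | exact: Hc].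
  by exists c; rewrite !inE eqxx; split => //; rewrite nbr_cone_c.
exists A; split => //.
move=> v; split.
  by move=> vA; rewrite !inE vA orbT nbr_cone_b; [split => //; exact: BN | exact: Hc].
case; rewrite !inE => /orP [/eqP ->|vA] //.
by rewrite nbr_cone_c.
Qed.
End Wheel.
Lemma apex_rim (G H : graph) (g : gV G -> gV H) (c : gV H) :
  injective g -> (forall x y, @gadj H (g x) (g y) = @gadj G x y) ->
  nbr [set: gV H] c = g @: [set: gV G] ->
  (forall x, nbr [set: gV H] (g x) = c |: g @: nbr [set: gV G] x) ->
  inS 2 [set: gV G] ->
  inS 2 (nbr [set: gV H] c) /\ forall x, inB 2 (nbr [set: gV H] (g x)).
Proof.
move=> ginj gadj' Nc Ng S2.
have [T _] := SB_iff ginj gadj' 2.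
have [T1 _] := SB_iff ginj gadj' 1.
split; first by rewrite Nc -T.
move=> x; rewrite Ng; apply: wheel.
- rewrite -T1; apply: (S_nbr S2); exact: in_setT.
- apply/negP=> /imsetP [y _ Ecy].
  have : g y \in nbr [set: gV H] c by rewrite Nc mem_imset // in_setT.
  by rewrite inE Ecy girr andbF.
- move=> a /imsetP [y _ ->].
  have : g y \in nbr [set: gV H] c by rewrite Nc mem_imset // in_setT.
  by rewrite inE => /andP [].
Qed.

Definition cone_adj (G : graph) : rel (option (gV G)) :=
  fun u v => match u, v with
  | Some a, Some b => @gadj G a b
  | None, Some _ | Some _, None => true
  | None, None => false end.

Lemma cone_sym G : symmetric (@cone_adj G).
Proof. by case=> [a|] [b|] //=; rewrite gsym. Qed.
Lemma cone_irr G : irreflexive (@cone_adj G).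
Proof. by case=> [a|] //=; rewrite girr. Qed.
Definition cone (G : graph) : graph := Graph (@cone_sym G) (@cone_irr G).

Section Cob.
Variables G1 G2 : graph.
Definition HH : graph := dunion (cone G1) (cone G2).
Definition g1 (x : gV G1) : gV HH := inl (Some x).
Definition g2 (x : gV G2) : gV HH := inr (Some x).

Lemma g1inj : injective g1. Proof. by move=> x y [->]. Qed.
Lemma g2inj : injective g2. Proof. by move=> x y [->]. Qed.

Lemma Nc1 : nbr [set: gV HH] (inl None) = g1 @: [set: gV G1].
Proof.
apply/setP=> v; rewrite inE in_setT /=; apply/idP/imsetP.
  by case: v => [[a|]|] //= _; exists a => //; rewrite in_setT.
by case=> a _ ->.
Qed.
Lemma Nc2 : nbr [set: gV HH] (inr None) = g2 @: [set: gV G2].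
Proof.
apply/setP=> v; rewrite inE in_setT /=; apply/idP/imsetP.
  by case: v => [|[a|]] //= _; exists a => //; rewrite in_setT.
by case=> a _ ->.
Qed.
Lemma Ng1 x : nbr [set: gV HH] (g1 x) = inl None |: g1 @: nbr [set: gV G1] x.
Proof.
apply/setP=> v; rewrite !inE /=; apply/idP/idP.
  case: v => [[a|]|] //= xa; try by rewrite eqxx.
  apply/imsetP; exists a => //.
  by rewrite inE in_setT.
case/orP=> [/eqP -> //|/imsetP [a]]; rewrite inE in_setT /= => xa ->; exact: xa.
Qed.
Lemma Ng2 x : nbr [set: gV HH] (g2 x) = inr None |: g2 @: nbr [set: gV G2] x.
Proof.
apply/setP=> v; rewrite !inE /=; apply/idP/idP.
  case: v => [|[a|]] //= xa; try by rewrite eqxx.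
  apply/imsetP; exists a => //.
  by rewrite inE in_setT.
case/orP=> [/eqP -> //|/imsetP [a]]; rewrite inE in_setT /= => xa ->; exact: xa.
Qed.

Lemma cob12 : in_S 2 G1 -> in_S 2 G2 -> cobordant G1 G2.
Proof.
move=> S1 S2.
have [A1 R1] := apex_rim g1inj (fun x y => erefl) Nc1 Ng1 S1.
have [A2 R2] := apex_rim g2inj (fun x y => erefl) Nc2 Ng2 S2.
exists HH; split.
  split.
    move=> v _; case: v => [[a|]|[a|]].
    - by right; exact: (R1 a).
    - by left.
    - by right; exact: (R2 a).
    - by left.
  by exists (inl None); split => //; apply: S_not_B.
pose Bd := [set v : gV HH | match v with inl (Some _) | inr (Some _) => true | _ => false end].
exists Bd; split.
  move=> v; rewrite inE; split.
    case: v => [[a|]|[a|]] //= _; split => //.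
    - exact: (R1 a).
    - exact: (R2 a).
  case=> _; case: v => [[a|]|[a|]] //= B.
  - by case: (S_not_B A1).
  - by case: (S_not_B A2).
exists (fun u : gV (dunion G1 G2) => match u with inl x => g1 x | inr y => g2 y end : gV HH).
split.
  by case=> [a|a] [b|b] //= [->].
split.
  apply/setP=> v; rewrite inE; apply/imsetP/idP.
    by case=> -[a|a] _ ->.
  case: v => [[a|]|[a|]] //= _.
  - by exists (inl a).
  - by exists (inr a).
by case=> [a|a] [b|b].
Qed.
End Cob.

Theorem mainTheorem6 :
  (forall G : graph, in_S 2 G -> cobordant G G) /\
  (forall G1 G2 : graph, in_S 2 G1 -> in_S 2 G2 ->
      cobordant G1 G2 -> cobordant G2 G1) /\
  (forall G1 G2 G3 : graph, in_S 2 G1 -> in_S 2 G2 -> in_S 2 G3 ->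
      cobordant G1 G2 -> cobordant G2 G3 -> cobordant G1 G3).
Proof.
split; first by move=> G S; exact: cob12.
split; first by move=> G1 G2 S1 S2 _; exact: cob12.
by move=> G1 G2 G3 S1 _ S3 _ _; exact: cob12.
Qed.
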